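(* Let $(P,\leqslant)$ be a conditionally-complete poset and let $P^* := \{x \in P : \exists\, y \in P,\ y \ll x\}$. Then for every directed subset $D$ of $P$ that is bounded above in $P$ and such that $D \cap P^*$ is nonempty, the set $D \cap P^*$ is directed and $\bigvee D = \bigvee (D \cap P^* )$ (suprema taken in $P$).
   Context: A poset is conditionally-complete if every nonempty subset bounded above has a supremum. A nonempty subset $D$ is directed if any two elements of $D$ have an upper bound in $D$. For $x,y \in P$, $x$ is way-below $y$, written $x \ll y$, if for every directed subset $D$ of $P$ bounded above with supremum $d_0$, $y \leqslant d_0$ implies $x \leqslant d$ for some $d \in D$. *)

(* Defs.v *)
From mathcomp Require Import all_boot all_order.
Set Implicit Arguments. Unset Strict Implicit. Unset Printing Implicit Defensive.
Import Order.TTheory.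
Local Open Scope order_scope.

Section PosetDefs.
Context {d : Order.disp_t} {T : porderType d}.

Definition upper_bound (A : T -> Prop) (u : T) : Prop :=
  forall a, A a -> a <= u.

Definition bounded_above (A : T -> Prop) : Prop := exists u, upper_bound A u.

Definition is_sup (A : T -> Prop) (s : T) : Prop :=
  upper_bound A s /\ forall u, upper_bound A u -> s <= u.

Definition cond_complete : Prop :=
  forall A : T -> Prop, (exists a, A a) -> bounded_above A -> exists s, is_sup A s.

Definition directed (D : T -> Prop) : Prop :=
  (exists x, D x) /\
  forall x y, D x -> D y -> exists z, D z /\ x <= z /\ y <= z.

Definition way_below (x y : T) : Prop :=
  forall (D : T -> Prop) (d0 : T),
    directed D -> bounded_above D -> is_sup D d0 ->
    y <= d0 -> exists d, D d /\ x <= d.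

Definition Pstar (x : T) : Prop := exists y, way_below y x.

End PosetDefs.

(* Main.v *)
Require Import Defs.
From mathcomp Require Import all_boot all_order.
Local Open Scope order_scope.
Import Order.TTheory.

Lemma Pstar_up (d : Order.disp_t) (T : porderType d) (x z : T) :
  Pstar x -> x <= z -> Pstar z.
Proof.
move=> [y Hy] xz; exists y => D d0 HD HB HS zd.
exact: (Hy D d0 HD HB HS (le_trans xz zd)).
Qed.

Theorem lemma2p1 (d : Order.disp_t) (T : porderType d) :
  @cond_complete d T ->
  forall D : T -> Prop,
    directed D -> bounded_above D ->
    (exists x, D x /\ Pstar x) ->
    directed (fun x => D x /\ Pstar x) /\
    (exists s, is_sup D s /\ is_sup (fun x => D x /\ Pstar x) s).
Proof.
move=> cc D [[a Da] dirD] bD [x0 [Dx0 Px0]].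
split.
  split; first by exists x0.
  move=> x y [Dx Px] [Dy Py].
  have [z [Dz [xz yz]]] := dirD x y Dx Dy.
  by exists z; split; [split; [|exact: Pstar_up Px xz]|].
have [s [ubs lss]] := cc D (ex_intro _ a Da) bD.
exists s; split; first by split.
split; first by move=> y [Dy _]; exact: ubs.
move=> u ubu; apply: lss => y Dy.
have [z [Dz [yz x0z]]] := dirD y x0 Dy Dx0.
apply: le_trans yz _; apply: ubu; split => //; exact: Pstar_up Px0 x0z.
Qed.
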